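(* Let $\mathcal K$ be the set of all continuous functions $k:\mathbb R\to[0,\infty)$ with $\int_{\mathbb R}k(x)\,dx=1$ such that there is a constant $\lambda>0$ with $\int_{\mathbb R}k(x)e^{\lambda|x|}\,dx<+\infty$. For $k\in\mathcal K$ define \[ E(k)=\operatorname{sign}(J(k))\Big[1-\inf_{\lambda\in\mathbb R}\int_{\mathbb R}k(x)e^{\lambda x}\,dx\Big],\qquad J(k)=\int_{\mathbb R}k(x)\,x\,dx . \] Then: (i) $E(k)=-E(\check k)$ for every $k\in\mathcal K$, where $\check k(x)=k(-x)$ for $x\in\mathbb R$; (ii) if $k_1,k_2\in\mathcal K$ and $k_1$ is more skewed to the right than $k_2$, i.e. $k_1(x)\geqslant k_2(x)$ for all $x>0$ and $k_1(x)\leqslant k_2(x)$ for all $x<0$, then $E(k_1)\geqslant E(k_2)$.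
   Context: $\operatorname{sign}$ denotes the sign function with $\operatorname{sign}(0)=0$. The integral $\int_{\mathbb R}k(x)e^{\lambda x}dx$ may equal $+\infty$ for some $\lambda$; the infimum is taken in $[0,+\infty]$. *)

(* Defs.v *)
From HB Require Import structures.
From mathcomp Require Import all_boot all_order all_algebra.
From mathcomp Require Import all_classical all_reals all_analysis.
Set Implicit Arguments. Unset Strict Implicit. Unset Printing Implicit Defensive.
Import Order.TTheory GRing.Theory Num.Theory.
Import numFieldNormedType.Exports.
Local Open Scope classical_set_scope.
Local Open Scope ring_scope.

Section Defs.
Variable R : realType.

Definition intR (f : R -> R) : \bar R :=
  (\int[@lebesgue_measure R]_(x in [set: R]) (f x)%:E)%E.

Definition inK (k : R -> R) : Prop :=
  [/\ continuous k,
      (forall x, 0 <= k x),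
      intR k = 1%:E
    & exists2 lam : R, 0 < lam &
        (intR (fun x => (k x * expR (lam * `|x|))%R) < +oo)%E].

(* J(k) = \int k(x) x dx  (finite for k in K) *)
Definition J (k : R -> R) : R := fine (intR (fun x => k x * x)).

Definition mgf_inf (k : R -> R) : \bar R :=
  ereal_inf [set intR (fun x => k x * expR (lam * x)) | lam in [set: R]].

(* E(k) = sign(J(k)) [1 - inf ...]   (Num.sg 0 = 0) *)
Definition E (k : R -> R) : \bar R :=
  ((Num.sg (J k))%:E * (1%:E - mgf_inf k))%E.

Definition check (k : R -> R) : R -> R := fun x => k (- x).

End Defs.

(* Main.v *)
Require Import Defs.
From HB Require Import structures.
From mathcomp Require Import all_boot all_order all_algebra.
From mathcomp Require Import all_classical all_reals all_analysis.
From mathcomp Require Import measurable_realfun.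
From mathcomp Require Import ring lra.
Import Order.TTheory GRing.Theory Num.Theory.
Import numFieldNormedType.Exports.
Local Open Scope classical_set_scope.
Local Open Scope ring_scope.

Section Helpers.
Variable R : realType.
Local Notation mu := (@lebesgue_measure R).

Lemma reflN_ge0 (g : R -> \bar R) : measurable_fun setT g ->
  (forall x, (0 <= g x)%E) ->
  (\int[mu]_(x in [set: R]) g (- x)%R = \int[mu]_(x in [set: R]) g x)%E.
Proof.
move=> mg g0.
have -> : (\int[mu]_(x in [set: R]) g (- x)%R =
    \int[mu]_(x in (-%R : R -> measurableTypeR R) @^-1` [set: R]) (g \o -%R) x)%E.
  by rewrite preimage_setT.
rewrite -ge0_integral_pushforward //=.
apply: eq_measure_integral => A mA _.
exact: (lebesgue_measureN mA).
Qed.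

Lemma reflN (f : R -> R) : measurable_fun setT f ->
  intR (fun x => f (- x)) = intR f.
Proof.
move=> mf; rewrite /intR integralE [RHS]integralE.
have mfE : measurable_fun setT (fun x => (f x)%:E) by exact/measurable_EFinP.
congr (_ - _)%E.
  rewrite -(reflN_ge0 ((fun x => (f x)%:E)^\+)%E).
  - by apply: eq_integral => x _; rewrite !funeposE.
  - exact: measurable_funepos.
  - by move=> x; exact: funepos_ge0.
rewrite -(reflN_ge0 ((fun x => (f x)%:E)^\-)%E).
- by apply: eq_integral => x _; rewrite !funenegE.
- exact: measurable_funeneg.
- by move=> x; exact: funeneg_ge0.
Qed.


Lemma mcont (k : R -> R) : continuous k -> measurable_fun setT k.
Proof. exact: continuous_measurable_fun. Qed.

Lemma ge0_intgr (f : R -> R) : measurable_fun setT f -> (forall x, 0 <= f x) ->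
  (intR f < +oo)%E -> mu.-integrable setT (fun x => (f x)%:E).
Proof.
move=> mf f0 fi; apply/integrableP; split; first exact/measurable_EFinP.
under eq_integral do rewrite gee0_abs ?lee_fin//.
exact: fi.
Qed.

Lemma intR_ge0 (f : R -> R) : (forall x, 0 <= f x) -> (0 <= intR f)%E.
Proof. by move=> f0; apply: integral_ge0 => x _; rewrite lee_fin. Qed.

Lemma kx_int (k : R -> R) : inK k -> mu.-integrable setT (fun x => (k x * x)%:E).
Proof.
case=> ck k0 k1 [lam lam0 fin].
have mk := @mcont k ck.
apply/integrableP; split.
  apply/measurable_EFinP; apply: measurable_funM => //.
apply: (@le_lt_trans _ _ (intR (fun x => lam^-1 * (k x * expR (lam * `|x|))))).
  apply: ge0_le_integral => //.
  - apply/measurable_EFinP; apply: measurableT_comp => //.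
    apply: measurable_funM => //.
  - apply/measurable_EFinP; apply: measurable_funM => //.
    apply: measurable_funM => //.
    apply: measurableT_comp; first exact: measurable_expR.
    apply: measurable_funM => //.
  move=> x _; rewrite /= lee_fin normrM ger0_norm // mulrCA ler_wpM2l //.
  rewrite ler_pdivlMl //.
  apply: le_trans (expR_ge1Dx _); lra.
rewrite /intR.
under eq_integral do rewrite EFinM.
rewrite ge0_integralZl_EFin //.
- apply: lte_mul_pinfty => //; rewrite lee_fin invr_ge0; exact: ltW.
- by move=> x _; rewrite lee_fin mulr_ge0 // expR_ge0.
- apply/measurable_EFinP; apply: measurable_funM => //.
  apply: measurableT_comp; first exact: measurable_expR.
  apply: measurable_funM => //.
- by rewrite invr_ge0; exact: ltW.
Qed.


Lemma JE (k : R -> R) : inK k -> intR (fun x => k x * x) = (J k)%:E.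
Proof.
move=> hk; rewrite /J fineK //.
exact: (integrable_fin_num measurableT (kx_int _ hk)).
Qed.

Lemma mexp (k : R -> R) lam : continuous k ->
  measurable_fun setT (fun x => k x * expR (lam * x)).
Proof.
move=> ck; apply: measurable_funM; first exact: mcont.
apply: measurableT_comp; first exact: measurable_expR.
apply: measurable_funM => //.
Qed.

Lemma M_ge (k : R -> R) lam : inK k ->
  ((1 + lam * J k)%:E <= intR (fun x => (k x * expR (lam * x))%R))%E.
Proof.
move=> hk; have [ck k0 k1 _] := hk.
have mk := @mcont k ck.
have [Mfin|] := ltP (intR (fun x => k x * expR (lam * x))) +oo%E; last first.
  by rewrite leye_eq => /eqP ->; rewrite leey.
have iM := ge0_intgr _ (mexp _ lam ck)
  (fun x => mulr_ge0 (k0 x) (expR_ge0 _)) Mfin.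
have k1f : (intR k < +oo)%E by rewrite k1 ltry.
have ik := ge0_intgr _ mk k0 k1f.
have ikx := integrableZl measurableT lam (kx_int _ hk).
have -> : ((1 + lam * J k)%:E = intR (fun x => k x + lam * (k x * x))%R)%E.
  rewrite /intR; under eq_integral do rewrite EFinD EFinM.
  rewrite integralD //.
  rewrite integralZl //.
  - rewrite -/(intR k) k1 -/(intR (fun x => k x * x)) (JE _ hk).
    by rewrite -EFinM -EFinD.
  - exact: kx_int.
apply: le_integral => //.
- rewrite /=; under eq_fun do rewrite EFinD EFinM.
  apply: integrableD => //.
move=> x _; rewrite lee_fin -[X in X + _]mulr1 mulrCA -mulrDr.
apply: ler_wpM2l => //; exact: expR_ge1Dx.
Qed.


Lemma cmpM (k1 k2 w : R -> R) : inK k1 -> inK k2 ->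
  measurable_fun setT w -> (forall x, 0 <= w x) ->
  (forall x, (k1 x - k2 x) * (w x - 1) <= 0) ->
  (intR (fun x => (k1 x * w x)%R) <= intR (fun x => (k2 x * w x)%R))%E.
Proof.
move=> [c1 p1 i1 _] [c2 p2 i2 _] mw w0 H.
have m1 := @mcont k1 c1; have m2 := @mcont k2 c2.
have h : (intR (fun x => (k1 x * w x + k2 x)%R) <= intR (fun x => (k2 x * w x + k1 x)%R))%E.
  apply: ge0_le_integral => //.
  - by move=> x _; rewrite lee_fin addr_ge0 // mulr_ge0.
  - apply/measurable_EFinP; apply: measurable_funD => //; exact: measurable_funM.
  - apply/measurable_EFinP; apply: measurable_funD => //; exact: measurable_funM.
  - move=> x _; rewrite lee_fin; have := H x; nra.
move: h; rewrite /intR.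
under eq_integral do rewrite EFinD.
under [X in (_ <= X)%E]eq_integral do rewrite EFinD.
rewrite ge0_integralD //; first last.
- by apply/measurable_EFinP.
- by move=> x _; rewrite lee_fin.
- apply/measurable_EFinP; exact: measurable_funM.
- by move=> x _; rewrite lee_fin mulr_ge0.
rewrite ge0_integralD //; first last.
- by apply/measurable_EFinP.
- by move=> x _; rewrite lee_fin.
- apply/measurable_EFinP; exact: measurable_funM.
- by move=> x _; rewrite lee_fin mulr_ge0.
rewrite -!/(intR _) i1 i2 leeD2rE //.
Qed.

Lemma mgf_le1 (k : R -> R) : inK k -> (mgf_inf k <= 1)%E.
Proof.
move=> [ck k0 k1 _]; apply: ereal_inf_lbound; exists 0 => //.
rewrite -k1; congr intR; apply: funext => x.
by rewrite mul0r expR0 mulr1.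
Qed.

Lemma mgf_ge0 (k : R -> R) : inK k -> (0 <= mgf_inf k)%E.
Proof.
move=> [ck k0 k1 _]; apply/ereal_infP => _ [lam _ <-].
apply: intR_ge0 => x; exact: mulr_ge0 (k0 x) (expR_ge0 _).
Qed.

Lemma mgfE (k : R -> R) : inK k ->
  mgf_inf k = (fine (mgf_inf k))%:E /\ 0 <= fine (mgf_inf k) <= 1.
Proof.
move=> hk; have h0 := mgf_ge0 _ hk; have h1 := mgf_le1 _ hk.
have fn : mgf_inf k \is a fin_num.
  by rewrite ge0_fin_numE // (le_lt_trans h1) // ltry.
split; first by rewrite fineK.
apply/andP; split; rewrite -lee_fin fineK //.
Qed.


Lemma Jcheck (k : R -> R) : inK k -> J (check k) = - J k.
Proof.
move=> hk; have [ck _ _ _] := hk.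
have mf : measurable_fun setT (fun y => - (k y * y)).
  apply: measurableT_comp => //; apply: measurable_funM => //; exact: mcont.
rewrite /J.
have e := reflN _ mf; rewrite /= in e.
have -> : intR (fun x => check k x * x) = intR (fun x => - (k (- x) * - x)).
  by congr intR; apply: funext => x /=; rewrite /check mulrN opprK.
rewrite e /intR.
under eq_integral do rewrite -mulN1r EFinM.
rewrite integralZl //; last exact: kx_int.
by rewrite mulN1e fineN.
Qed.

Lemma Mcheck (k : R -> R) lam : continuous k ->
  intR (fun x => check k x * expR (lam * x)) = intR (fun x => k x * expR (- lam * x)).
Proof.
move=> ck; rewrite -(reflN _ (mexp _ (- lam) ck)); congr intR; apply: funext => x /=.
by rewrite /check mulrNN.
Qed.

Lemma mgf_check (k : R -> R) : inK k -> mgf_inf (check k) = mgf_inf k.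
Proof.
move=> [ck _ _ _]; rewrite /mgf_inf; congr ereal_inf.
apply/seteqP; split => _ [lam _ <-].
  by exists (- lam) => //; rewrite Mcheck.
by exists (- lam) => //; rewrite Mcheck // opprK.
Qed.

Lemma skew_le (k1 k2 : R -> R) lam : inK k1 -> inK k2 ->
  (forall x : R, 0 < x -> k2 x <= k1 x) ->
  (forall x : R, x < 0 -> k1 x <= k2 x) -> lam <= 0 ->
  (intR (fun x => (k1 x * expR (lam * x))%R) <= intR (fun x => (k2 x * expR (lam * x))%R))%E.
Proof.
move=> h1 h2 s1 s2 l0.
apply: (cmpM _ _ (fun x => expR (lam * x))) => //.
- apply: measurableT_comp; first exact: measurable_expR.
  apply: measurable_funM => //.
move=> x; case: (ltgtP x 0) => [xn|xp|->].
- have := s2 x xn => hk; have he : 1 <= expR (lam * x) by apply: le_trans (expR_ge1Dx _); rewrite lerDl; nra.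
  apply: mulr_le0_ge0; lra.
- have := s1 x xp => hk; have he : expR (lam * x) <= 1 by rewrite expR_le1; nra.
  apply: mulr_ge0_le0; lra.

- by rewrite mulr0 expR0 subrr mulr0.
Qed.

Lemma skew_ge (k1 k2 : R -> R) lam : inK k1 -> inK k2 ->
  (forall x : R, 0 < x -> k2 x <= k1 x) ->
  (forall x : R, x < 0 -> k1 x <= k2 x) -> 0 <= lam ->
  (intR (fun x => (k2 x * expR (lam * x))%R) <= intR (fun x => (k1 x * expR (lam * x))%R))%E.
Proof.
move=> h1 h2 s1 s2 l0.
apply: (cmpM _ _ (fun x => expR (lam * x))) => //.
- apply: measurableT_comp; first exact: measurable_expR.
  apply: measurable_funM => //.
move=> x; case: (ltgtP x 0) => [xn|xp|->].
- have := s2 x xn => hk; have he : expR (lam * x) <= 1 by rewrite expR_le1; nra.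
  apply: mulr_ge0_le0; lra.

- have := s1 x xp => hk; have he : 1 <= expR (lam * x) by apply: le_trans (expR_ge1Dx _); rewrite lerDl; nra.
  apply: mulr_le0_ge0; lra.
- by rewrite mulr0 expR0 subrr mulr0.
Qed.

End Helpers.
Arguments mgfE {R k}.
Arguments Jcheck {R k}.
Arguments mgf_check {R k}.
Arguments JE {R k}.
Arguments kx_int {R k}.
Arguments skew_le {R k1 k2 lam}.
Arguments skew_ge {R k1 k2 lam}.
Arguments mgf_le1 {R k}.
Arguments M_ge {R k}.

Theorem proposition2p1 (R : realType) :
  (forall k : R -> R, inK k -> E k = (- E (check k))%E) /\
  (forall k1 k2 : R -> R, inK k1 -> inK k2 ->
     (forall x : R, 0 < x -> k2 x <= k1 x) ->
     (forall x : R, x < 0 -> k1 x <= k2 x) ->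
     (E k2 <= E k1)%E).
Proof.
split.
  move=> k hk; have [mE _] := mgfE hk.
  rewrite /E Jcheck // mgf_check // mE -!EFinB -!EFinM -EFinN sgrN mulNr opprK.
  by [].
move=> k1 k2 h1 h2 s1 s2.
have J21 : J k2 <= J k1.
  rewrite -lee_fin -!JE //; apply: le_integral => //; try exact: kx_int.
  move=> x _; rewrite lee_fin.
  case: (ltgtP x 0) => [xn|xp|->]; last by rewrite !mulr0.
  + have := s2 x xn; nra.
  + have := s1 x xp; nra.
have [m1E /andP[a0 a1]] := mgfE h1; have [m2E /andP[b0 b1]] := mgfE h2.
rewrite /E m1E m2E -!EFinB -!EFinM lee_fin.
case: (ltP 0 (J k2)) => [J2p|J2n].
  have J1p : 0 < J k1 by exact: lt_le_trans J21.
  rewrite !gtr0_sg // !mul1r lerD2l lerN2 -lee_fin -m1E -m2E.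
  apply/ereal_infP => _ [lam _ <-].
  case: (leP lam 0) => [ln|lp].
    apply: le_trans (skew_le h1 h2 s1 s2 ln).
    by apply: ereal_inf_lbound; exists lam.
  apply: (le_trans (mgf_le1 h1)); apply: le_trans (M_ge lam h2).
  by rewrite lee_fin; nra.
case: (ltP (J k1) 0) => [J1n|J1p].
  have J2n' : J k2 < 0 by exact: le_lt_trans J1n.
  rewrite !ltr0_sg // !mulN1r lerN2 lerD2l lerN2 -lee_fin -m1E -m2E.
  apply/ereal_infP => _ [lam _ <-].
  case: (leP 0 lam) => [lp|ln].
    apply: le_trans (skew_ge h1 h2 s1 s2 lp).
    by apply: ereal_inf_lbound; exists lam.
  apply: (le_trans (mgf_le1 h2)); apply: le_trans (M_ge lam h1).
  by rewrite lee_fin; nra.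
apply: (@le_trans _ _ 0).
  apply: mulr_le0_ge0; first by rewrite sgr_le0.
  lra.
apply: mulr_ge0; first by rewrite sgr_ge0.
lra.
Qed.
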